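(* Let $q$ be a prime power, let $\Gamma$ be a projective bundle in $\mathrm{PG}(2,q)$, let $A$ be the binary point-line incidence matrix of $\mathrm{PG}(2,q)$ and $B$ the binary point-oval incidence matrix of $\Gamma$ (rows indexed by points in the same order), and let $H=(A\mid B)$. Then the maximum column intersection of $H$ equals $2$. Consequently, one round of the bit-flipping decoding algorithm with respect to $H$ corrects every error of Hamming weight at most $\lfloor\frac{q+1}{4}\rfloor$ in the code $C=\ker(H)=\{c\in\mathbb{F}_2^{2(q^2+q+1)}: cH^\top=0\}$; that is, for every $c\in C$ and $e$ with $\mathrm{wt}(e)\le\lfloor\frac{q+1}{4}\rfloor$, one round applied to $c+e$ outputs $c$.
   Context: $\mathrm{PG}(2,q)$ is the projective plane whose points and lines are the 1- and 2-dimensional subspaces of $\mathbb{F}_q^3$. An oval is a set of $q+1$ points such that every line meets it in at most two points. A projective bundle is a collection of $q^2+q+1$ ovals of $\mathrm{PG}(2,q)$ any two of which intersect in exactly one point. Incidence matrices have entry $1$ iff the point (row) lies on the line/oval (column). The maximum column intersection of a binary matrix is the maximum, over pairs of distinct columns, of the number of rows in which both columns have a $1$. $H$ has constant column weight $v=q+1$. One round of the bit-flipping algorithm on input $y$ for a binary matrix $H$ of constant column weight $v$: compute $s=Hy^\top$; for each column $j$ let $u_j$ be the number of rows $i$ with $H_{ij}=1$ and $s_i=1$; output $y$ with the bits in positions $\{j: u_j>v/2\}$ flipped. *)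

(* Defs.v *)
From HB Require Import structures.
From mathcomp Require Import all_boot all_order all_algebra all_field.
Set Implicit Arguments. Unset Strict Implicit. Unset Printing Implicit Defensive.
Import GRing.Theory.
Local Open Scope ring_scope.

Section PG2.
Variable F : finFieldType.

(* A k-dimensional subspace of F^3, represented canonically by the square
   matrix <<A>>%MS generating it (row space). *)
Definition is_subsp (k : nat) (A : 'M[F]_3) : bool :=
  (\rank A == k)%N && (<<A>>%MS == A).

Definition pg_point := {A : 'M[F]_3 | is_subsp 1 A}.
Definition pg_line  := {A : 'M[F]_3 | is_subsp 2 A}.

Definition incident (P : pg_point) (L : pg_line) : bool :=
  (val P <= val L)%MS.

Definition is_oval (O : {set pg_point}) : bool :=
  (#|O| == #|F|.+1)%N &&
  [forall L : pg_line, #|[set P in O | incident P L]| <= 2]%N.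

Definition bundle_size : nat := (#|F| ^ 2 + #|F| + 1)%N.

Definition is_projective_bundle (G : 'I_bundle_size -> {set pg_point}) : Prop :=
  injective G /\ (forall i, is_oval (G i)) /\
  (forall i j, i != j -> #|G i :&: G j| = 1%N).

Definition hcol := (pg_line + 'I_bundle_size)%type.

Definition Hmat (G : 'I_bundle_size -> {set pg_point}) (P : pg_point) (c : hcol)
  : bool :=
  match c with
  | inl L => incident P L
  | inr i => P \in G i
  end.
End PG2.

Section Binary.
Variables (R C : finType) (H : R -> C -> bool).

Definition max_col_intersection : nat :=
  \max_(jk : C * C | jk.1 != jk.2) #|[set i | H i jk.1 && H i jk.2]|.

Definition syndrome (y : {ffun C -> 'F_2}) (i : R) : 'F_2 :=
  \sum_(j | H i j) y j.

Definition in_code (c : {ffun C -> 'F_2}) : Prop :=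
  forall i, syndrome c i = 0.

Definition hweight (y : {ffun C -> 'F_2}) : nat := #|[set j | y j != 0]|.

Definition unsat (y : {ffun C -> 'F_2}) (j : C) : nat :=
  #|[set i | H i j && (syndrome y i == 1)]|.

(* one round of bit flipping, column weight v: flip j iff u_j > v/2 *)
Definition bitflip_round (v : nat) (y : {ffun C -> 'F_2}) : {ffun C -> 'F_2} :=
  [ffun j => if (v < 2 * unsat y j)%N then y j + 1 else y j].
End Binary.

(* Main.v *)
Require Import Defs.
From mathcomp Require Import all_boot all_order all_algebra all_field.
From mathcomp Require Import zify ring.
Import GRing.Theory.
Local Open Scope ring_scope.
Set Implicit Arguments. Unset Strict Implicit.

Section Geo.
Variable F : finFieldType.

Lemma subsp_rank k (A : 'M[F]_3) : is_subsp k A -> \rank A = k.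
Proof. by case/andP=> /eqP. Qed.

Lemma subsp_gen k (A : 'M[F]_3) : is_subsp k A -> <<A>>%MS = A.
Proof. by case/andP=> _ /eqP. Qed.

Lemma is_subsp_gen m (A : 'M[F]_(m,3)) : is_subsp (\rank A) <<A>>%MS.
Proof. by rewrite /is_subsp genmxE eqxx genmx_id eqxx. Qed.

Lemma eq_subsp k1 k2 (A B : 'M[F]_3) : is_subsp k1 A -> is_subsp k2 B ->
  (A == B)%MS -> A = B.
Proof.
move=> hA hB /eqmxP eAB.
by rewrite -(subsp_gen hA) -(subsp_gen hB); apply: eq_genmx.
Qed.

Lemma sub_eq_rank (A B : 'M[F]_3) : (A <= B)%MS -> (\rank B <= \rank A)%N ->
  (A == B)%MS.
Proof.
move=> sAB rk; apply/andP; split=> //.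
by have [_ <-] := mxrank_leqif_sup sAB; rewrite eqn_leq rk mxrankS.
Qed.

Lemma pt_neq_rank (P1 P2 : pg_point F) : P1 != P2 ->
  \rank (val P1 + val P2)%MS = 2%N.
Proof.
move=> nP.
have r1 := subsp_rank (valP P1); have r2 := subsp_rank (valP P2).
have le2 : (\rank (val P1 + val P2)%MS <= 2)%N.
  by have := mxrank_adds_leqif (val P1) (val P2); rewrite r1 r2 => -[].
have ge1 : (1 <= \rank (val P1 + val P2)%MS)%N.
  by apply: leq_trans (mxrankS (addsmxSl (val P1) (val P2))); rewrite r1.
have [lt2|gt2|//] := ltngtP (\rank (val P1 + val P2)%MS) 2; last by lia.
have e1 : (val P1 == val P1 + val P2)%MS.
  by apply: sub_eq_rank; [apply: addsmxSl | rewrite r1; lia].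
have e2 : (val P2 == val P1 + val P2)%MS.
  by apply: sub_eq_rank; [apply: addsmxSr | rewrite r2; lia].
have : val P1 = val P2.
  apply: (eq_subsp (valP P1) (valP P2)).
  move: e1 e2 => /andP[a1 b1] /andP[a2 b2].
  by apply/andP; split; [apply: submx_trans a1 b2 | apply: submx_trans a2 b1].
by move/val_inj=> e; rewrite e eqxx in nP.
Qed.

Lemma two_pts_line (P1 P2 : pg_point F) (L : pg_line F) : P1 != P2 ->
  incident P1 L -> incident P2 L -> (val P1 + val P2 == val L)%MS.
Proof.
move=> nP i1 i2; apply: sub_eq_rank; first by rewrite addsmx_sub; apply/andP.
by rewrite pt_neq_rank // (subsp_rank (valP L)).
Qed.


Lemma lines_eq (P1 P2 : pg_point F) (L1 L2 : pg_line F) : P1 != P2 ->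
  incident P1 L1 -> incident P2 L1 -> incident P1 L2 -> incident P2 L2 ->
  L1 = L2.
Proof.
move=> nP a1 a2 b1 b2.
move: (two_pts_line nP a1 a2) (two_pts_line nP b1 b2) => /andP[x1 y1] /andP[x2 y2].
apply: val_inj; apply: (eq_subsp (valP L1) (valP L2)).
by apply/andP; split; [apply: submx_trans y1 x2 | apply: submx_trans y2 x1].
Qed.

Lemma pt0_subsp : is_subsp 1 <<(delta_mx 0 0 : 'rV[F]_3)>>%MS.
Proof. by have := is_subsp_gen (delta_mx 0 0 : 'rV[F]_3); rewrite mxrank_delta. Qed.

Definition pt0 : pg_point F := @exist _ (fun A : 'M[F]_3 => is_subsp 1 A) _ pt0_subsp.

Definition pt_of (v : 'rV[F]_3) : pg_point F := insubd pt0 <<v>>%MS.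

Lemma val_pt_of v : v != 0 -> val (pt_of v) = <<v>>%MS.
Proof.
move=> nz; rewrite val_insubd.
by have := is_subsp_gen v; rewrite rank_rV nz => ->.
Qed.

Lemma indep (u w : 'rV[F]_3) (x y : F) : u != 0 -> ~~ (w <= u)%MS ->
  x *: u + y *: w = 0 -> x = 0 /\ y = 0.
Proof.
move=> nu nw e.
have y0 : y = 0.
  apply/eqP; apply: contraNT nw => ny.
  have h : y *: w = - (x *: u) by apply/eqP; rewrite -addr_eq0 addrC e.
  have -> : w = y^-1 *: (y *: w) by rewrite scalerA mulVf // scale1r.
  by rewrite h scalemx_sub // eqmx_opp scalemx_sub.
split=> //; move: e; rewrite y0 scale0r addr0 => /eqP.
by rewrite scaler_eq0 (negbTE nu) orbF => /eqP.
Qed.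

Lemma line_card (L : pg_line F) : (#|F| <= #|[set P | incident P L]|)%N.
Proof.
set M := val L.
have rM : \rank M = 2%N := subsp_rank (valP L).
set u := nz_row M.
have nu : u != 0.
  by rewrite nz_row_eq0 -mxrank_eq0 rM.
have nMu : ~~ (M <= u)%MS.
  apply/negP => /mxrankS; rewrite rM rank_rV nu //.
have [i Hi] := row_subPn nMu.
set w := row i M in Hi.
have uM : (u <= M)%MS := nz_row_sub M.
have wM : (w <= M)%MS := row_sub i M.
have nv : forall a : F, u + a *: w != 0.
  move=> a; apply/eqP => e.
  have [h _] : (1:F) = 0 /\ a = 0 by apply: indep nu Hi _; rewrite scale1r.
  by move/eqP: h; rewrite oner_eq0.
pose f (a : F) := pt_of (u + a *: w).
have finj : injective f.
  move=> a b; rewrite /f => /(congr1 val); rewrite !val_pt_of // => e.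
  have : ((u + b *: w)%R <= (u + a *: w)%R)%MS.
    by move/genmxP: e => /andP[_ h].
  move/sub_rVP => [k ek].
  have e0 : (1 - k) *: u + (b - k * a) *: w = 0.
    have -> : (1 - k) *: u + (b - k * a) *: w = (u + b *: w) - k *: (u + a *: w).
      by apply/rowP => j; rewrite !mxE; ring.
    by rewrite ek subrr.
  have [k1 ab] := indep nu Hi e0.
  move/eqP: k1; rewrite subr_eq0 => /eqP k1.
  by move/eqP: ab; rewrite -k1 mul1r subr_eq0 => /eqP ->.
apply: leq_trans (_ : #|f @: [set: F]| <= _)%N; first by rewrite (card_imset _ finj) cardsT.
apply: subset_leq_card; apply/subsetP => P /imsetP [a _ ->].
rewrite inE /incident /f val_pt_of // genmxE.
by apply: addmx_sub => //; apply: scalemx_sub.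
Qed.

Lemma exists_line (P1 P2 : pg_point F) : P1 != P2 ->
  exists L : pg_line F, incident P1 L && incident P2 L.
Proof.
move=> nP.
have h : is_subsp 2 <<(val P1 + val P2)%MS>>%MS.
  by have := is_subsp_gen (val P1 + val P2)%MS; rewrite pt_neq_rank.
exists (@exist _ (fun A : 'M[F]_3 => is_subsp 2 A) _ h).
by rewrite /incident /= !genmxE addsmxSl addsmxSr.
Qed.

Lemma card_F_gt1 : (1 < #|F|)%N.
Proof. by apply/card_gt1P; exists 0, 1; split => //; rewrite eq_sym oner_eq0. Qed.
End Geo.
Lemma F2_nz (x : 'F_2) : x != 0 -> x = 1.
Proof. by case: x => [[|[|n]] //= Hn] _; apply/val_inj. Qed.
Lemma F2_11 : (1 + 1 : 'F_2) = 0.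
Proof. by apply/val_inj. Qed.

Section Dec.
Variables (R C : finType) (H : R -> C -> bool).

Lemma card_bigcup_le (S : {set C}) (B : C -> {set R}) :
  (#|\bigcup_(k in S) B k| <= \sum_(k in S) #|B k|)%N.
Proof.
elim/big_rec2: _ => [|k n U kS h]; first by rewrite cards0.
by apply: leq_trans (leq_card_setU _ U).1 _; rewrite leq_add2l.
Qed.

Lemma syn_add (c e : {ffun C -> 'F_2}) i :
  syndrome H [ffun j => c j + e j] i = syndrome H c i + syndrome H e i.
Proof. by rewrite /syndrome -big_split; apply: eq_bigr => j _; rewrite ffunE. Qed.

Lemma syn_nz (e : {ffun C -> 'F_2}) i : syndrome H e i != 0 ->
  exists2 k, e k != 0 & H i k.
Proof.
move=> h; have [k /andP[Hk ek]|none] := pickP (fun k => H i k && (e k != 0)).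
  by exists k.
move: h; rewrite /syndrome big1 ?eqxx // => k Hk.
by have := none k; rewrite Hk /= => /negbFE/eqP.
Qed.

Lemma syn_one (e : {ffun C -> 'F_2}) i j : H i j ->
  (forall k, k != j -> e k != 0 -> ~~ H i k) -> syndrome H e i = e j.
Proof.
move=> Hij h; rewrite /syndrome (bigD1 j) //= big1 ?addr0 // => k /andP[Hk nkj].
by apply/eqP; apply: (contraLR _ Hk) => ek; exact: h k nkj ek.
Qed.

Lemma decode (v : nat)
  (inter2 : forall j k, j != k -> (#|[set i | H i j && H i k]| <= 2)%N)
  (colw : forall j, (v <= #|[set i | H i j]|.+1)%N)
  (c e : {ffun C -> 'F_2}) : in_code H c -> (4 * hweight e <= v)%N ->
  bitflip_round H v [ffun j => c j + e j] = c.
Proof.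
move=> cc wt; apply/ffunP => j; rewrite ffunE.
set y := [ffun j => c j + e j].
have syn : forall i, syndrome H y i = syndrome H e i.
  by move=> i; rewrite syn_add cc add0r.
set S := [set k | e k != 0].
have tS : hweight e = #|S| by [].
rewrite tS in wt.
have [ej|ej] := boolP (e j != 0).
  have jS : j \in S by rewrite inE.
  set B := \bigcup_(k in S :\ j) [set i | H i j && H i k].
  set U := [set i | H i j && (syndrome H y i == 1)].
  have sub : [set i | H i j] \subset U :|: B.
    apply/subsetP => i; rewrite inE => Hij.
    have [iB|niB] := boolP (i \in B); first by rewrite inE iB orbT.
    rewrite inE; apply/orP; left; rewrite inE Hij /= syn.
    rewrite (syn_one Hij) ?(F2_nz ej) // => k nkj ek; apply/negP => Hik.
    move/negP: niB; apply; apply/bigcupP; exists k.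
      by rewrite !inE nkj.
    by rewrite inE Hij Hik.
  have cB : (#|B| <= 2 * (#|S| - 1))%N.
    apply: leq_trans (card_bigcup_le _ _) _.
    apply: leq_trans (_ : _ <= \sum_(k in S :\ j) 2)%N _.
      by apply: leq_sum => k; rewrite !inE => /andP[nkj _]; apply: inter2; rewrite eq_sym.
    rewrite sum_nat_const.
    have := cardsD1 j S; rewrite jS /=; lia.
  have cU := leq_trans (subset_leq_card sub) (leq_card_setU U B).1.
  have cj := colw j.
  have S1 : (1 <= #|S|)%N by rewrite card_gt0; apply/set0Pn; exists j.
  rewrite ifT; last by rewrite /unsat -/U; lia.
  by rewrite ffunE (F2_nz ej) -addrA F2_11 addr0.
rewrite ifN; first by rewrite ffunE (eqP (negbNE ej)) addr0.
have sub : [set i | H i j && (syndrome H y i == 1)] \subset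
           \bigcup_(k in S) [set i | H i j && H i k].
  apply/subsetP => i; rewrite inE => /andP[Hij /eqP s1].
  have [k ek Hik] : exists2 k, e k != 0 & H i k.
    by apply: syn_nz; rewrite -syn s1 oner_eq0.
  by apply/bigcupP; exists k; rewrite !inE ?ek // Hij Hik.
have cU : (unsat H y j <= 2 * #|S|)%N.
  apply: leq_trans (subset_leq_card sub) _.
  apply: leq_trans (card_bigcup_le _ _) _.
  apply: leq_trans (_ : _ <= \sum_(k in S) 2)%N _.
    apply: leq_sum => k kS; apply: inter2.
    by apply: contraNneq ej => ->; move: kS; rewrite inE.
  by rewrite sum_nat_const; lia.
lia.
Qed.
End Dec.

Theorem proposition4p14 (F : finFieldType)
  (G : 'I_(bundle_size F) -> {set pg_point F}) :
  is_projective_bundle G ->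
  max_col_intersection (Hmat G) = 2%N /\
  (forall c e : {ffun hcol F -> 'F_2},
     in_code (Hmat G) c ->
     (hweight e <= (#|F|.+1) %/ 4)%N ->
     bitflip_round (Hmat G) #|F|.+1 [ffun j => c j + e j] = c).
Proof.
move=> [Ginj [Goval Gint]].
have inter2 : forall j k : hcol F, j != k ->
    (#|[set i | Hmat G i j && Hmat G i k]| <= 2)%N.
  case=> [L1|i1] [L2|i2] /= njk.
  - apply: leq_trans (_ : _ <= 1)%N _ => //; rewrite leqNgt.
    apply/negP => /card_gt1P [P1 [P2 [h1 h2 nP]]].
    move: h1 h2; rewrite !inE /= => /andP[a1 b1] /andP[a2 b2].
    by move: njk; rewrite (lines_eq nP a1 a2 b1 b2) eqxx.
  - apply: leq_trans (_ : _ <= #|[set P in G i2 | incident P L1]|)%N _.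
      by apply: subset_leq_card; apply/subsetP => P; rewrite !inE andbC.
    by case/andP: (Goval i2) => _ /forallP /(_ L1).
  - apply: leq_trans (_ : _ <= #|[set P in G i1 | incident P L2]|)%N _.
      by apply: subset_leq_card; apply/subsetP => P; rewrite !inE.
    by case/andP: (Goval i1) => _ /forallP /(_ L2).
  - rewrite (_ : [set i | _] = G i1 :&: G i2); first by rewrite Gint.
    by apply/setP => P; rewrite !inE.
have colw : forall j : hcol F, (#|F|.+1 <= #|[set i | Hmat G i j]|.+1)%N.
  case=> [L|i] /=.
  - rewrite ltnS; apply: leq_trans (line_card L) _.
    by apply: subset_leq_card; apply/subsetP => P; rewrite !inE.
  - case/andP: (Goval i) => /eqP <- _.
    by apply: leqW; apply: subset_leq_card; apply/subsetP => P; rewrite !inE.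
split; last first.
  move=> c e cc hw; apply: (decode inter2 colw cc); lia.
apply/eqP; rewrite eqn_leq; apply/andP; split.
  by apply/bigmax_leqP => -[j k] /= njk; exact: inter2.
have b0 : (0 < bundle_size F)%N by rewrite /bundle_size addn1.
set i0 := Ordinal b0.
have : (1 < #|G i0|)%N.
  by case/andP: (Goval i0) => /eqP -> _; have := card_F_gt1 F; lia.
move/card_gt1P => [P1 [P2 [h1 h2 nP]]].
have [L /andP[a1 a2]] := exists_line nP.
apply: leq_trans (leq_bigmax_cond (inl L, inr i0) _) => //=.
apply: leq_trans (_ : 2 <= #|[set P1; P2]|)%N _; first by rewrite cards2 nP.
apply: subset_leq_card; apply/subsetP => P; rewrite !inE.
by case/orP => /eqP ->; apply/andP.
Qed.
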